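(* For $j\in\{1,\dots,n\}$, let $g^{\mathrm{in}}_j$ be the restriction of $\chi_{\tau_j}$ with top point $\tau_j=(\tau_j^1,\tau_j^2)$ to $X_j=[q_j^l,q_j^u]$, where $q_j^l\le\tau_j^1\le q_j^u$. Write $\tau^1=(\tau_j^1)_{j},\tau^2=(\tau_j^2)_j,q^l=(q^l_j)_j,q^u=(q^u_j)_j\in\mathbb{R}^n$. Then: (i) $g^{\mathrm{out}}=\star\{(g^{\mathrm{in}}_j,X_j)\}_{j=1}^n$ is the restriction of the $\chi$ function with top point $(\mathbf{1}^\top\tau^1,\mathbf{1}^\top\tau^2)$ to the domain $[\mathbf{1}^\top q^l,\mathbf{1}^\top q^u]$; (ii) the set of maximizers in the definition of $g^{\mathrm{out}}(z)$ is $\{x^*\in[q^l,\tau^1]:\mathbf{1}^\top x^*=z\}$ if $\mathbf{1}^\top q^l\le z<\mathbf{1}^\top\tau^1$, is $\{\tau^1\}$ if $z=\mathbf{1}^\top\tau^1$, and is $\{x^*\in[\tau^1,q^u]:\mathbf{1}^\top x^*=z\}$ if $\mathbf{1}^\top\tau^1<z\le\mathbf{1}^\top q^u$.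
   Context: For $\tau=(\tau_1,\tau_2)\in\mathbb{R}^2$, $\chi_\tau(x)=x-\tau_1+\tau_2$ for $x\le\tau_1$ and $\chi_\tau(x)=-x+\tau_1+\tau_2$ for $x>\tau_1$; $\tau$ is its top point. The operator $\star$: given $g_j:X_j\to\mathbb{R}$, $j=1,\dots,n$, $\star\{(g_j,X_j)\}_{j=1}^n$ is the function with domain the Minkowski sum $\sum_jX_j$ defined by $z\mapsto\max\{\sum_jg_j(x_j):x\in\mathbb{R}^n,\ \mathbf{1}^\top x=z,\ x_j\in X_j\ \forall j\}$. For vectors, $[a,b]=\{x:a\le x\le b\}$ componentwise; $\mathbf{1}$ is the all-ones vector. *)

(* Defs.v *)
From HB Require Import structures.
From mathcomp Require Import all_boot all_order all_algebra.
From mathcomp Require Import classical_sets reals.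
Set Implicit Arguments. Unset Strict Implicit. Unset Printing Implicit Defensive.
Import Order.TTheory GRing.Theory Num.Theory.
Local Open Scope ring_scope.
Local Open Scope classical_set_scope.

Section Defs.
Variable R : realType.

Definition chi (t1 t2 : R) (x : R) : R :=
  if x <= t1 then x - t1 + t2 else - x + t1 + t2.

Definition box n (a b : 'I_n -> R) : set ('I_n -> R) :=
  [set x | forall j, a j <= x j <= b j].

Definition star_feas n (X : 'I_n -> set R) (z : R) : set ('I_n -> R) :=
  [set x | \sum_(j < n) x j = z /\ forall j, X j (x j)].

Definition minkowski_sum n (X : 'I_n -> set R) : set R :=
  [set z | exists x, star_feas X z x].

Definition star_obj n (g : 'I_n -> R -> R) (x : 'I_n -> R) : R :=
  \sum_(j < n) g j (x j).

Definition star_value n (g : 'I_n -> R -> R) (X : 'I_n -> set R) (z v : R) : Prop :=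
  (exists2 x, star_feas X z x & star_obj g x = v) /\
  (forall x, star_feas X z x -> star_obj g x <= v).

Definition star_argmax n (g : 'I_n -> R -> R) (X : 'I_n -> set R) (z : R)
  : set ('I_n -> R) :=
  [set x | star_feas X z x /\ forall y, star_feas X z y -> star_obj g y <= star_obj g x].

End Defs.

(* Main.v *)
Require Import Defs.
From HB Require Import structures.
From mathcomp Require Import all_boot all_order all_algebra.
From mathcomp Require Import classical_sets reals boolp.
From mathcomp Require Import ring lra.
Import Order.TTheory GRing.Theory Num.Theory.
Local Open Scope ring_scope.
Local Open Scope classical_set_scope.

Section Helpers.
Variable R : realType.

Lemma chiE (t1 t2 x : R) : chi t1 t2 x = t2 - `|x - t1|.
Proof.
rewrite /chi; case: ifP => h.
  by rewrite ler0_norm ?subr_le0 //; ring.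
by rewrite gtr0_norm ?subr_gt0 ?ltNge ?h //; ring.
Qed.

Lemma exist_box n (a b : 'I_n -> R) z : (forall j, a j <= b j) ->
  \sum_(j < n) a j <= z <= \sum_(j < n) b j ->
  exists x : 'I_n -> R, (forall j, a j <= x j <= b j) /\ \sum_(j < n) x j = z.
Proof.
move=> hab /andP[h1 h2].
have [e|ne] := eqVneq (\sum_(j < n) a j) (\sum_(j < n) b j).
  exists a; split => [j|]; first by rewrite lexx hab.
  by apply/eqP; rewrite eq_le h1 /= e.
set sa := \sum_(j < n) a j in h1 ne *; set sb := \sum_(j < n) b j in h2 ne *.
set l := (z - sa) / (sb - sa).
have hp : 0 < sb - sa by rewrite subr_gt0 lt_neqAle ne (le_trans h1 h2).
have l0 : 0 <= l by apply: divr_ge0; [rewrite subr_ge0| exact: ltW].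
have l1 : l <= 1 by rewrite /l ler_pdivrMr // mul1r lerD2r.
exists (fun j => a j + l * (b j - a j)); split.
  move=> j; have hj : 0 <= b j - a j by rewrite subr_ge0.
  apply/andP; split; first by rewrite lerDl mulr_ge0.
  nra.
rewrite big_split /= -mulr_sumr sumrB -/sa -/sb /l divfK ?gt_eqF //.
ring.
Qed.

Lemma sum_abs_npos n (d : 'I_n -> R) : (forall j, d j <= 0) ->
  \sum_(j < n) `|d j| = `|\sum_(j < n) d j|.
Proof.
move=> h; rewrite ler0_norm ?sumr_le0 // -sumrN.
by apply: eq_bigr => j _; rewrite ler0_norm.
Qed.

Lemma sum_abs_nneg n (d : 'I_n -> R) : (forall j, 0 <= d j) ->
  \sum_(j < n) `|d j| = `|\sum_(j < n) d j|.
Proof.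
move=> h; rewrite ger0_norm ?sumr_ge0 //.
by apply: eq_bigr => j _; rewrite ger0_norm.
Qed.

Lemma eq_npos n (d : 'I_n -> R) : \sum_(j < n) d j <= 0 ->
  \sum_(j < n) `|d j| = `|\sum_(j < n) d j| -> forall j, d j <= 0.
Proof.
move=> hs; rewrite ler0_norm // -sumrN => e j.
have e2 : \sum_(j < n) (`|d j| + d j) = 0.
  by rewrite big_split /= e sumrN addNr.
have hge : forall j, true -> 0 <= `|d j| + d j.
  move=> i _; rewrite -lerBlDr sub0r; by rewrite -normrN ler_norm.
have := psumr_eq0P hge e2 (i := j) isT.
move=> h0; have : d j = - `|d j| by apply/eqP; rewrite -addr_eq0 addrC h0.
move=> ->; by rewrite oppr_le0.
Qed.

Lemma eq_nneg n (d : 'I_n -> R) : 0 <= \sum_(j < n) d j ->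
  \sum_(j < n) `|d j| = `|\sum_(j < n) d j| -> forall j, 0 <= d j.
Proof.
move=> hs e j.
have := @eq_npos n (fun i => - d i).
rewrite sumrN oppr_le0 => /(_ hs).
rewrite normrN; under eq_bigr do rewrite normrN.
by move=> /(_ e j); rewrite oppr_le0.
Qed.

End Helpers.

Theorem lemma5 (R : realType) (n : nat) (tau1 tau2 ql qu : 'I_n -> R)
  (hq : forall j, ql j <= tau1 j <= qu j) :
  let X := fun j => `[ql j, qu j]%classic in
  let g := fun j => chi (tau1 j) (tau2 j) in
  let s := fun v : 'I_n -> R => \sum_(j < n) v j in
  (* (i) *)
  minkowski_sum X = `[s ql, s qu]%classic /\
  (forall z, s ql <= z <= s qu ->
     star_value g X z (chi (s tau1) (s tau2) z)) /\
  (* (ii) *)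
  (forall z, s ql <= z < s tau1 ->
     star_argmax g X z = box ql tau1 `&` [set x | s x = z]) /\
  star_argmax g X (s tau1) = [set tau1] /\
  (forall z, s tau1 < z <= s qu ->
     star_argmax g X z = box tau1 qu `&` [set x | s x = z]).
Proof.
move=> X g s.
have hl : forall j, ql j <= tau1 j by move=> j; case/andP: (hq j).
have hu : forall j, tau1 j <= qu j by move=> j; case/andP: (hq j).
have objE : forall x, star_obj g x = s tau2 - \sum_(j < n) `|x j - tau1 j|.
  move=> x; rewrite /star_obj /g /s; under eq_bigr do rewrite chiE.
  by rewrite sumrB.
have feasE : forall z x, star_feas X z x <->
    s x = z /\ forall j, ql j <= x j <= qu j.
  move=> z x; split => -[h1 h2]; split => // j; move: (h2 j);
    by rewrite /X /= in_itv.
have dsum : forall x, \sum_(j < n) (x j - tau1 j) = s x - s tau1.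
  by move=> x; rewrite sumrB.
have upper : forall z x, star_feas X z x ->
    star_obj g x <= chi (s tau1) (s tau2) z.
  move=> z x /feasE [hz _]; rewrite objE chiE lerD2l lerN2 -hz -dsum.
  exact: ler_norm_sum.
have objeq : forall z x, s x = z ->
    (star_obj g x = chi (s tau1) (s tau2) z <->
     \sum_(j < n) `|x j - tau1 j| = `|\sum_(j < n) (x j - tau1 j)|).
  move=> z x hz; rewrite objE chiE dsum hz; split.
    by move=> h; apply: oppr_inj; apply: (addrI (s tau2)).
  by move=> ->.
have stl : s ql <= s tau1 by apply: ler_sum => j _; exact: hl.
have stu : s tau1 <= s qu by apply: ler_sum => j _; exact: hu.
have attain : forall z, s ql <= z <= s qu ->
    exists2 x, star_feas X z x & star_obj g x = chi (s tau1) (s tau2) z.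
  move=> z /andP[z1 z2].
  case: (leP z (s tau1)) => hz.
    have [|x [hb hs]] := @exist_box R n ql tau1 z hl; first by apply/andP.
    exists x.
      apply/feasE; split => // j; case/andP: (hb j) => a b.
      by rewrite a (le_trans b (hu j)).
    apply/(objeq z x hs); apply: sum_abs_npos => j.
    by rewrite subr_le0; case/andP: (hb j).
  have [|x [hb hs]] := @exist_box R n tau1 qu z hu.
    by apply/andP; split => //; exact: ltW.
  exists x.
    apply/feasE; split => // j; case/andP: (hb j) => a b.
    by rewrite b (le_trans (hl j) a).
  apply/(objeq z x hs); apply: sum_abs_nneg => j.
  by rewrite subr_ge0; case/andP: (hb j).
have argE : forall z, s ql <= z <= s qu -> forall x, star_argmax g X z x <->
    star_feas X z x /\
    \sum_(j < n) `|x j - tau1 j| = `|\sum_(j < n) (x j - tau1 j)|.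
  move=> z hz x; have [y fy ey] := attain z hz; split.
    move=> [fx mx]; split => //; have [sx _] := (feasE _ _).1 fx.
    apply/(objeq z x sx); apply/eqP; rewrite eq_le upper //= -ey; exact: mx.
  move=> [fx ex]; split => // y' fy'; have [sx _] := (feasE _ _).1 fx.
  rewrite (proj2 (objeq z x sx) ex); exact: upper.
split.
  apply/seteqP; split => z /=.
    move=> [x fx]; have [sx bx] := (feasE _ _).1 fx; rewrite in_itv /= -sx.
    by apply/andP; split; apply: ler_sum => j _; case/andP: (bx j).
  rewrite in_itv /= => hz; have [x fx _] := attain z hz; by exists x.
split.
  by move=> z hz; split; [exact: attain | exact: upper].
split.
  move=> z /andP[z1 z2].
  have hz : s ql <= z <= s qu by rewrite z1 (le_trans (ltW z2)).
  apply/seteqP; split => x.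
    move/(argE z hz) => [fx ex]; have [sx bx] := (feasE _ _).1 fx; split => //=.
    have := @eq_npos R n (fun j => x j - tau1 j) _ ex; rewrite dsum subr_le0 sx => /(_ (ltW z2)) h j.
    by case/andP: (bx j) => -> _; rewrite -subr_le0 h.
  move=> [/= bx sx]; apply/(argE z hz); split.
    apply/feasE; split => // j; case/andP: (bx j) => a b.
    by rewrite a (le_trans b (hu j)).
  by apply: sum_abs_npos => j; rewrite subr_le0; case/andP: (bx j).
split.
  have hz : s ql <= s tau1 <= s qu by rewrite stl stu.
  apply/seteqP; split => x.
    move/(argE _ hz) => [fx ex]; have [sx _] := (feasE _ _).1 fx.
    have d0 : \sum_(j < n) (x j - tau1 j) = 0 by rewrite dsum sx subrr.
    have h1 := @eq_npos R n (fun j => x j - tau1 j) (ltac:(by rewrite d0)) ex.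
    have h2 := @eq_nneg R n (fun j => x j - tau1 j) (ltac:(by rewrite d0)) ex.
    rewrite /=; apply: funext => j; apply/eqP; rewrite -subr_eq0 eq_le h1 h2.
    done.
  move=> /= ->; apply/(argE _ hz); split.
    by apply/feasE; split.
  by apply: sum_abs_npos => j; rewrite subrr.
move=> z /andP[z1 z2].
have hz : s ql <= z <= s qu by rewrite z2 (le_trans stl (ltW z1)).
apply/seteqP; split => x.
  move/(argE z hz) => [fx ex]; have [sx bx] := (feasE _ _).1 fx; split => //=.
  have := @eq_nneg R n (fun j => x j - tau1 j) _ ex; rewrite dsum subr_ge0 sx => /(_ (ltW z1)) h j.
  by case/andP: (bx j) => _ ->; rewrite -subr_ge0 h.
move=> [/= bx sx]; apply/(argE z hz); split.
  apply/feasE; split => // j; case/andP: (bx j) => a b.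
  by rewrite b (le_trans (hl j) a).
by apply: sum_abs_nneg => j; rewrite subr_ge0; case/andP: (bx j).
Qed.
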